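(* Let $S$ be a set of $n$ points in $\mathbb{R}^k$ under an $L_p$ metric $d$ ($1\le p<\infty$). Consider the following level-by-level construction: set $S_1=S$; given a nonempty $S_i$, choose a pivot $p_i$ uniformly at random from $S_i$ (independently of previous levels), let $d_i=d(p_i,S_i)$, form the axis-aligned grid $G_i$ with boxes of side length $d_i/(6k)$, let $S_i'$ be the set of points $x\in S_i$ such that no other point of $S_i$ lies in the $3^k$ boxes of $G_i$ consisting of the box containing $x$ and its bordering boxes, set $S_{i+1}=S_i\setminus S_i'$, and recurse on $S_{i+1}$ if it is nonempty. Then with high probability the construction makes $O(\log n)$ recursive calls, i.e., the resulting sparse partition has $O(\log n)$ levels.
   Context: $d(x,T)=\min\{d(x,y):y\in T\setminus\{x\}\}$. A bound holds with high probability on input size $n$ if it holds with probability at least $1-1/n^c$ for some constant $c>0$. *)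

(* Defs.v *)
From HB Require Import structures.
From mathcomp Require Import all_boot all_order all_algebra.
From mathcomp Require Import all_classical all_reals all_analysis.
Set Implicit Arguments. Unset Strict Implicit. Unset Printing Implicit Defensive.
Import Order.TTheory GRing.Theory Num.Theory.
Local Open Scope ring_scope.

(* Points of R^k are row vectors 'rV[R]_k; a finite point set is a
   duplicate-free sequence of points. *)

Section SparsePartition.
Variables (R : realType) (k : nat) (p : R).

Definition Lp_dist (x y : 'rV[R]_k) : R :=
  (\sum_(j < k) `|x ord0 j - y ord0 j| `^ p) `^ (p^-1).

(* d(x,T) = min { d(x,y) : y in T \ {x} }  (value 0 if T \ {x} is empty;
   this case only occurs when |T| = 1 and is irrelevant to the process). *)
Definition nn_dist (x : 'rV[R]_k) (T : seq 'rV[R]_k) : R :=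
  let ds := [seq Lp_dist x y | y <- T & y != x] in
  foldr Num.min (head 0 ds) ds.

Definition cell (s t : R) : int := Num.floor (t / s).

Definition near_box (s : R) (x y : 'rV[R]_k) : bool :=
  [forall j : 'I_k, `|cell s (y ord0 j) - cell s (x ord0 j)| <= 1].

Definition isolated (s : R) (T : seq 'rV[R]_k) (x : 'rV[R]_k) : bool :=
  ~~ has (fun y => (y != x) && near_box s x y) T.

Definition next_level (T : seq 'rV[R]_k) (q : 'rV[R]_k) : seq 'rV[R]_k :=
  let s := nn_dist q T / (6 * k%:R) in
  [seq x <- T | ~~ isolated s T x].

(* prob_within T m = probability that the construction started at S_1 = T,
   with pivots chosen independently and uniformly at each level, terminates
   after at most m levels (i.e. S_{m+1} is empty). *)
Fixpoint prob_within (T : seq 'rV[R]_k) (m : nat) : R :=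
  match m with
  | 0 => if T is [::] then 1 else 0
  | m'.+1 =>
      if T is [::] then 1
      else (size T)%:R^-1 * \sum_(q <- T) prob_within (next_level T q) m'
  end.

End SparsePartition.

(* Main.v *)
Require Import Defs.
From HB Require Import structures.
From mathcomp Require Import all_boot all_order all_algebra.
From mathcomp Require Import all_classical all_reals all_analysis.
From mathcomp Require Import ring lra.
Import Order.TTheory GRing.Theory Num.Theory.
Local Open Scope ring_scope.

Section Proof.
Variables (R : realType) (k : nat) (p : R).
Hypothesis hp : 1 <= p.

Lemma p_gt0 : 0 < p. Proof. by apply: lt_le_trans hp. Qed.

Lemma Lp_pos (x y : 'rV[R]_k) : x != y -> 0 < Lp_dist p x y.
Proof.
move=> nxy; rewrite /Lp_dist; apply: powR_gt0.
case: (pickP (fun j => x ord0 j != y ord0 j)) => [j Hj | H]; last first.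
  by case/eqP: nxy; apply/rowP => j; move/negbFE: (H j) => /eqP.
rewrite (bigD1 j) //=; apply: ltr_pwDl.
  by apply: powR_gt0; rewrite normr_gt0 subr_eq0.
by apply: sumr_ge0 => i _; apply: powR_ge0.
Qed.

Lemma Lp_le (x y : 'rV[R]_k) t : 0 <= t ->
  (forall j, `|x ord0 j - y ord0 j| <= t) -> Lp_dist p x y <= k%:R * t.
Proof.
move=> t0 H; rewrite /Lp_dist.
have p0 := p_gt0.
have h1 : \sum_(j < k) `|x ord0 j - y ord0 j| `^ p <= (k%:R * t) `^ p.
  apply: (@le_trans _ _ (\sum_(j < k) t `^ p)).
    apply: ler_sum => j _; apply: (ge0_ler_powR (ltW p0)); rewrite ?nnegrE //.
  rewrite big_const_ord iter_addr addr0 powRM // -[t `^ p *+ k]mulr_natl.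
  apply: ler_wpM2r; first exact: powR_ge0.
  case: k => [|n]; first by rewrite powR0 // gt_eqF.
  rewrite -{1}(powRr1 (ler0n _ n.+1)); apply: ler_powR => //.
  by rewrite ler1n.
apply: (@le_trans _ _ (((k%:R * t) `^ p) `^ p^-1)).
  apply: ge0_ler_powR; rewrite ?nnegrE ?invr_ge0 ?(ltW p0) ?powR_ge0 //.
  by apply: sumr_ge0 => i _; apply: powR_ge0.
by rewrite -powRrM mulfV ?gt_eqF // powRr1 // mulr_ge0.
Qed.

Lemma foldr_min_le (a : R) ds z : z \in ds -> foldr Num.min a ds <= z.
Proof.
elim: ds => //= d ds IH; rewrite in_cons => /orP [/eqP -> | /IH h].
  by rewrite ge_min lexx.
by rewrite ge_min h orbT.
Qed.

Lemma foldr_min_gt0 (a : R) ds : 0 < a -> all (fun z => 0 < z) ds ->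
  0 < foldr Num.min a ds.
Proof.
move=> a0; elim: ds => //= d ds IH /andP [d0 /IH h].
by rewrite lt_min d0 h.
Qed.

Lemma nn_le (x y : 'rV[R]_k) T : y \in T -> y != x -> nn_dist p x T <= Lp_dist p x y.
Proof.
move=> yT yx; rewrite /nn_dist /=; apply: foldr_min_le.
by apply: map_f; rewrite mem_filter yx.
Qed.

Lemma nn_gt0 (x y : 'rV[R]_k) T : y \in T -> y != x -> 0 < nn_dist p x T.
Proof.
move=> yT yx; rewrite /nn_dist /=.
set ds := [seq _ | _ <- _].
have hall : all (fun z => 0 < z) ds.
  apply/allP => z /mapP [w]; rewrite mem_filter => /andP [wx _] ->.
  by apply: Lp_pos; rewrite eq_sym.
have : ds != [::].
  rewrite -size_eq0 size_map size_filter -lt0n -has_count.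
  by apply/hasP; exists y.
case: ds hall => // d ds' /= /andP [d0 h] _.
by rewrite lt_min d0 foldr_min_gt0.
Qed.

Lemma cell_near (s a b : R) : 0 < s -> `|cell s a - cell s b| <= 1 -> `|a - b| < 2 * s.
Proof.
move=> s0; rewrite /cell ler_norml => /andP [h1 h2].
have ha := floor_itv (a / s); have hb := floor_itv (b / s).
move: ha hb => /andP [ha1 ha2] /andP [hb1 hb2].
have e1 : ((Num.floor (a / s) - Num.floor (b / s))%:~R : R) <= 1.
  by rewrite -[X in _ <= X]/((1%:~R : R)) ler_int.
have e2 : (-1 : R) <= ((Num.floor (a / s) - Num.floor (b / s))%:~R : R).
  by rewrite -[X in X <= _]/(((-1)%:~R : R)) ler_int.
rewrite intrB in e1 e2; rewrite intrD /= in ha2 hb2.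
have : `|a / s - b / s| < 2 by rewrite ltr_norml; apply/andP; split; lra.
rewrite -mulrBl normrM (gtr0_norm (x:=s^-1)); last by rewrite invr_gt0.
rewrite ltr_pdivrMr //.
Qed.


Lemma key (T : seq 'rV[R]_k) q x : q \in T -> x \in T ->
  nn_dist p q T <= nn_dist p x T ->
  Defs.isolated (nn_dist p q T / (6 * k%:R)) T x.
Proof.
move=> qT xT hle; apply/hasPn => y yT; apply/negP => /andP [yx nb].
have k0 : (0 < k)%N.
  case: k x y yx {xT yT nb hle qT} => // x y; case/eqP; apply/rowP => [[]] //.
have d0 : 0 < nn_dist p q T.
  have [xq | xq] := eqVneq x q.
    by have := @nn_gt0 q y T yT; rewrite -xq; apply.
  by have := @nn_gt0 q x T xT; apply.
set d := nn_dist p q T in hle d0 nb *.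
have kR : (0 : R) < k%:R by rewrite ltr0n.
have s0 : 0 < d / (6 * k%:R) by rewrite divr_gt0 // mulr_gt0.
have hj : forall j, `|x ord0 j - y ord0 j| <= 2 * (d / (6 * k%:R)).
  move=> j; rewrite distrC; apply: ltW; apply: cell_near => //.
  by move/forallP: nb => /(_ j).
have : Lp_dist p x y <= k%:R * (2 * (d / (6 * k%:R))).
  by apply: Lp_le => //; rewrite mulr_ge0 // ltW.
have := @nn_le x y T yT yx.
have -> : k%:R * (2 * (d / (6 * k%:R))) = d / 3.
  by field; rewrite gt_eqF.
lra.
Qed.

Lemma count_in (T : eqType) (a b : pred T) (s : seq T) :
  {in s, forall x, a x -> b x} -> (count a s <= count b s)%N.
Proof.
elim: s => //= z s IH H.
apply: leq_add; last by apply: IH => w ws; apply: H; rewrite in_cons ws orbT.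
by case: (a z) (H z (mem_head _ _)) => //= ->.
Qed.

Lemma size_next (T : seq 'rV[R]_k) q : q \in T ->
  (size (next_level p T q) <= count (fun x => (nn_dist p x T < nn_dist p q T)%R) T)%N.
Proof.
move=> qT; rewrite /next_level size_filter; apply: count_in => x xT.
apply: contraR; rewrite -leNgt => h; exact: key.
Qed.

Lemma sum_count (T : seq 'rV[R]_k) (f : 'rV[R]_k -> R) :
  (2 * \sum_(q <- T) count (fun x => (f x < f q)%R) T <= size T * size T)%N.
Proof.
have E : forall q, count (fun x => (f x < f q)%R) T = \sum_(x <- T) ((f x < f q)%R : nat).
  by move=> q; rewrite -sum1_count big_mkcond.
rewrite (eq_bigr _ (fun q _ => E q)) mul2n -addnn.
rewrite {2}exchange_big -big_split /=.
apply: (@leq_trans (\sum_(q <- T) \sum_(x <- T) 1)%N).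
  apply: leq_sum => q _; rewrite -big_split; apply: leq_sum => x _ /=.
  by case: ltgtP.
rewrite (eq_bigr (fun _ => size T)) => [|q _]; last by rewrite sum1_size.
by rewrite big_const_seq count_predT iter_addn_0.
Qed.


Lemma fail_bound m : forall T : seq 'rV[R]_k,
  1 - prob_within p T m <= (size T)%:R / 2 ^+ m.
Proof.
elim: m => [|m IH] T; case E: T => [|a T'].
- by rewrite /= subrr mul0r.
- by rewrite /= expr0 divr1 subr0 ler1n.
- by rewrite /= subrr mul0r.
rewrite -E.
have -> : prob_within p T m.+1 =
  (size T)%:R^-1 * \sum_(q <- T) prob_within p (next_level p T q) m by rewrite E.
set n := (size T)%:R.
have n0 : 0 < n by rewrite /n E ltr0n.
set e := (2 : R) ^+ m.
have e0 : 0 < e by rewrite exprn_gt0.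
set A := \sum_(q <- T) _.
set B := ((\sum_(q <- T) size (next_level p T q))%N)%:R : R.
have hA : n - B / e <= A.
  have : \sum_(q <- T) (1 - (size (next_level p T q))%:R / e) <= A.
    by apply: ler_sum => q _; have := IH (next_level p T q); lra.
  rewrite sumrB -mulr_suml -natr_sum.
  have -> : \sum_(q <- T) (1 : R) = n.
    by rewrite /n -sum1_size natr_sum.
  by [].
have hB : 2 * B <= n * n.
  rewrite /B /n -natrM. rewrite -natrM ler_nat.
  apply: leq_trans (sum_count T (fun x => nn_dist p x T)).
  rewrite leq_mul2l /=; rewrite big_seq_cond [X in (_ <= X)%N]big_seq_cond.
  by apply: leq_sum => q /andP [qT _]; apply: size_next.
set ni := n^-1. set ei := e^-1.
have ni0 : 0 <= ni by rewrite /ni invr_ge0 ltW.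
have ei0 : 0 <= ei by rewrite /ei invr_ge0 ltW.
have h2 : ni * B * ei <= n * ei / 2.
  have -> : n * ei / 2 = ni * (n * n / 2) * ei.
    by rewrite /ni; field; rewrite gt_eqF.
  apply: ler_wpM2r => //; apply: ler_wpM2l => //; lra.
have h1 : ni * (n - B * ei) <= ni * A by apply: ler_wpM2l.
have h3 : ni * (n - B * ei) = 1 - ni * B * ei.
  by rewrite /ni; field; rewrite gt_eqF.
rewrite exprS -/e.
have -> : n / (2 * e) = n * ei / 2 by rewrite /ei; field; rewrite gt_eqF.
lra.
Qed.

End Proof.

Theorem lemma4p1 (R : realType) (k : nat) (p : R) :
  1 <= p ->
  exists (C c : R), 0 < C /\ 0 < c /\
    forall (S : seq 'rV[R]_k), uniq S -> (2 <= size S)%N ->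
    forall m : nat, C * ln (size S)%:R <= m%:R ->
      1 - ((size S)%:R `^ c)^-1 <= prob_within p S m.
Proof.
move=> hp.
have l2 : 0 < ln (2 : R) by apply: ln_gt0; rewrite ltr1n.
exists (2 / ln 2), 1; split; first by rewrite divr_gt0.
split; first exact: ltr01.
move=> S _ hS m hm.
have F := @fail_bound R k p hp m S.
set n := (size S)%:R in F hm *.
have n0 : 0 < n by rewrite /n ltr0n (leq_trans _ hS).
rewrite powRr1; last exact: ltW n0.
set e := (2 : R) ^+ m in F.
have e0 : 0 < e by rewrite exprn_gt0.
have hne : n ^+ 2 <= e.
  rewrite -ler_ln ?posrE ?exprn_gt0 // /e !lnXn // -[ln n *+ 2]mulr_natr -[ln 2 *+ m]mulr_natr.
  have : (2 / ln 2 * ln n) * ln 2 <= m%:R * ln 2 by apply: ler_wpM2r => //; exact: ltW.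
  have -> : 2 / ln 2 * ln n * ln 2 = ln n * 2%:R by field; rewrite gt_eqF.
  by rewrite [ln 2 * _]mulrC.
have : n / e <= n^-1.
  have -> : n^-1 = n * (n ^+ 2)^-1 by field; rewrite gt_eqF.
  apply: ler_wpM2l; first exact: ltW.
  by rewrite lef_pV2 ?posrE ?exprn_gt0.
lra.
Qed.
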